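(* Let $P\in\mathbb{O}P^2$ and let $Z\in T^{\mathbb{C}}_P\mathbb{O}P^2$ be isotropic, i.e. $\operatorname{tr}(Z\circ Z)=0$. Then the complex-linear endomorphism $\hat Z$ of $\mathfrak{h}^0_3(\mathbb{O})^{\mathbb{C}}$ defined by $$\hat Z(X)=-4\,Z\circ X+4\,Z\circ(P\circ X)+4\,P\circ(Z\circ X)$$ is nilpotent with nilorder $r\le 5$ (i.e. $\hat Z^5=0$).
   Context: $\mathfrak{h}_3(\mathbb{O})$ is the real vector space of hermitian $3\times3$ octonionic matrices with Jordan product $a\circ b=\frac12(ab+ba)$, extended complex-bilinearly to the complexification; $\mathfrak{h}^0_3(\mathbb{O})$ is the subspace of traceless matrices. $\mathbb{O}P^2=\{P\in\mathfrak{h}_3(\mathbb{O}):P\circ P=P,\ \operatorname{tr}P=1\}$, $T_P\mathbb{O}P^2=\{Z\in\mathfrak{h}_3(\mathbb{O}):2P\circ Z=Z\}$ and $T^{\mathbb{C}}_P\mathbb{O}P^2$ is its complexification. (For real $Z$, $\hat Z$ is the derivative in direction $Z$ of the orthogonal projection onto the $10$-dimensional subspace $V_P\subset\mathfrak{h}^0_3(\mathbb{O})$ corresponding to $P$, mapping $V_P\to V_P^\perp$ and $V_P^\perp\to V_P$.) The nilorder is the least $r$ with $\hat Z^r=0$. *)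

(* Defs.v *)
(* The real case is K = R
   (R : realType), the complexification is K = R[i]; complex scalars act
   componentwise and octonion conjugation is complex-linear, so
   h_3(O)^C = hermitian 3x3 matrices over O (x) C = octonions over R[i]. *)
From HB Require Import structures.
From mathcomp Require Import all_boot all_order all_algebra.
From mathcomp Require Import reals.
From mathcomp.real_closed Require Import complex.

Set Implicit Arguments.
Unset Strict Implicit.
Unset Printing Implicit Defensive.
Import GRing.Theory.
Local Open Scope ring_scope.

Section Octonions.
Variable K : comPzRingType.

Record quat := Quat { q0 : K; q1 : K; q2 : K; q3 : K }.

Definition qadd (p q : quat) :=
  Quat (q0 p + q0 q) (q1 p + q1 q) (q2 p + q2 q) (q3 p + q3 q).
Definition qopp (p : quat) := Quat (- q0 p) (- q1 p) (- q2 p) (- q3 p).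
Definition qscale (k : K) (p : quat) :=
  Quat (k * q0 p) (k * q1 p) (k * q2 p) (k * q3 p).
Definition qconj (p : quat) := Quat (q0 p) (- q1 p) (- q2 p) (- q3 p).
Definition qzero := Quat 0 0 0 0.
Definition qone := Quat 1 0 0 0.
Definition qmul (p q : quat) :=
  Quat (q0 p * q0 q - q1 p * q1 q - q2 p * q2 q - q3 p * q3 q)
       (q0 p * q1 q + q1 p * q0 q + q2 p * q3 q - q3 p * q2 q)
       (q0 p * q2 q - q1 p * q3 q + q2 p * q0 q + q3 p * q1 q)
       (q0 p * q3 q + q1 p * q2 q - q2 p * q1 q + q3 p * q0 q).

(* octonions (a, b) = a + b l, a b quaternions *)
Record oct := Oct { ofst : quat; osnd : quat }.

Definition oadd (x y : oct) := Oct (qadd (ofst x) (ofst y)) (qadd (osnd x) (osnd y)).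
Definition oopp (x : oct) := Oct (qopp (ofst x)) (qopp (osnd x)).
Definition oscale (k : K) (x : oct) := Oct (qscale k (ofst x)) (qscale k (osnd x)).
Definition oconj (x : oct) := Oct (qconj (ofst x)) (qopp (osnd x)).
Definition ozero := Oct qzero qzero.
Definition oone := Oct qone qzero.
(* Cayley-Dickson: (a,b)(c,d) = (ac - d^* b, da + b c^* ) *)
Definition omul (x y : oct) :=
  Oct (qadd (qmul (ofst x) (ofst y)) (qopp (qmul (qconj (osnd y)) (osnd x))))
      (qadd (qmul (osnd y) (ofst x)) (qmul (osnd x) (qconj (ofst y)))).

Definition omat := 'M[oct]_3.

Definition i0 : 'I_3 := @Ordinal 3 0 isT.
Definition i1 : 'I_3 := @Ordinal 3 1 isT.
Definition i2 : 'I_3 := @Ordinal 3 2 isT.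

Definition madd (A B : omat) : omat := \matrix_(i, j) oadd (A i j) (B i j).
Definition mscale (k : K) (A : omat) : omat := \matrix_(i, j) oscale k (A i j).
Definition mzero : omat := \matrix_(i, j) ozero.
Definition mmul (A B : omat) : omat :=
  \matrix_(i, j) oadd (omul (A i i0) (B i0 j))
                      (oadd (omul (A i i1) (B i1 j)) (omul (A i i2) (B i2 j))).
(* trace (an octonion; for hermitian matrices it is a scalar) *)
Definition mtr (A : omat) : oct := oadd (A i0 i0) (oadd (A i1 i1) (A i2 i2)).
Definition hermitian (A : omat) : Prop := forall i j, A i j = oconj (A j i).

End Octonions.

Arguments qzero {K}. Arguments qone {K}. Arguments ozero {K}. Arguments oone {K}.
Arguments mzero {K}.

Definition jordan (K : fieldType) (A B : omat K) : omat K :=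
  mscale (2%:R^-1) (madd (mmul A B) (mmul B A)).

Definition qmap (K L : comPzRingType) (f : K -> L) (p : quat K) : quat L :=
  Quat (f (q0 p)) (f (q1 p)) (f (q2 p)) (f (q3 p)).
Definition omap (K L : comPzRingType) (f : K -> L) (x : oct K) : oct L :=
  Oct (qmap f (ofst x)) (qmap f (osnd x)).
Definition mmap (K L : comPzRingType) (f : K -> L) (A : omat K) : omat L :=
  \matrix_(i, j) omap f (A i j).

Definition RtoC (R : realType) (x : R) : R[i] := Complex x 0.
Definition complexify (R : realType) (A : omat R) : omat R[i] := mmap (@RtoC R) A.

Definition OP2 (R : realType) (P : omat R) : Prop :=
  hermitian P /\ jordan P P = P /\ mtr P = oone.

Definition in_TC (R : realType) (P : omat R) (Z : omat R[i]) : Prop :=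
  hermitian Z /\ mscale 2%:R (jordan (complexify P) Z) = Z.

Definition in_h03C (R : realType) (X : omat R[i]) : Prop :=
  hermitian X /\ mtr X = ozero.

Definition Zhat (R : realType) (P : omat R) (Z : omat R[i]) (X : omat R[i])
  : omat R[i] :=
  let Pc := complexify P in
  madd (mscale (- 4%:R) (jordan Z X))
       (madd (mscale 4%:R (jordan Z (jordan Pc X)))
             (mscale 4%:R (jordan Pc (jordan Z X)))).

(* Main.v *)
Require Import Defs.
From HB Require Import structures.
From mathcomp Require Import all_boot all_order all_algebra.
From mathcomp Require Import reals.
From mathcomp.real_closed Require Import complex.
From mathcomp Require Import ring.
Set Implicit Arguments. Unset Strict Implicit. Unset Printing Implicit Defensive.
Import GRing.Theory Num.Theory.
Local Open Scope ring_scope.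

Section HM.
Variable K : fieldType.

Record hm := HM { d0 : K; d1 : K; d2 : K; ea : oct K; eb : oct K; ec : oct K }.
Lemma hm_ext (u v : hm) : d0 u = d0 v -> d1 u = d1 v -> d2 u = d2 v -> q0 (ofst (ea u)) = q0 (ofst (ea v)) -> q1 (ofst (ea u)) = q1 (ofst (ea v)) -> q2 (ofst (ea u)) = q2 (ofst (ea v)) -> q3 (ofst (ea u)) = q3 (ofst (ea v)) -> q0 (osnd (ea u)) = q0 (osnd (ea v)) -> q1 (osnd (ea u)) = q1 (osnd (ea v)) -> q2 (osnd (ea u)) = q2 (osnd (ea v)) -> q3 (osnd (ea u)) = q3 (osnd (ea v)) -> q0 (ofst (eb u)) = q0 (ofst (eb v)) -> q1 (ofst (eb u)) = q1 (ofst (eb v)) -> q2 (ofst (eb u)) = q2 (ofst (eb v)) -> q3 (ofst (eb u)) = q3 (ofst (eb v)) -> q0 (osnd (eb u)) = q0 (osnd (eb v)) -> q1 (osnd (eb u)) = q1 (osnd (eb v)) -> q2 (osnd (eb u)) = q2 (osnd (eb v)) -> q3 (osnd (eb u)) = q3 (osnd (eb v)) -> q0 (ofst (ec u)) = q0 (ofst (ec v)) -> q1 (ofst (ec u)) = q1 (ofst (ec v)) -> q2 (ofst (ec u)) = q2 (ofst (ec v)) -> q3 (ofst (ec u)) = q3 (ofst (ec v)) -> q0 (osnd (ec u)) = q0 (osnd (ec v)) -> q1 (osnd (ec u)) = q1 (osnd (ec v)) -> q2 (osnd (ec u)) = q2 (osnd (ec v)) -> q3 (osnd (ec u)) = q3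 (osnd (ec v)) -> u = v.
Proof. case: u => ? ? ? [[? ? ? ?] [? ? ? ?]] [[? ? ? ?] [? ? ? ?]] [[? ? ? ?] [? ? ? ?]]; case: v => ? ? ? [[? ? ? ?] [? ? ? ?]] [[? ? ? ?] [? ? ? ?]] [[? ? ? ?] [? ? ? ?]] /=; by do 27 move=> ->. Qed.
Definition enc (u : hm) : seq K := [:: d0 u; d1 u; d2 u; q0 (ofst (ea u)); q1 (ofst (ea u)); q2 (ofst (ea u)); q3 (ofst (ea u)); q0 (osnd (ea u)); q1 (osnd (ea u)); q2 (osnd (ea u)); q3 (osnd (ea u)); q0 (ofst (eb u)); q1 (ofst (eb u)); q2 (ofst (eb u)); q3 (ofst (eb u)); q0 (osnd (eb u)); q1 (osnd (eb u)); q2 (osnd (eb u)); q3 (osnd (eb u)); q0 (ofst (ec u)); q1 (ofst (ec u)); q2 (ofst (ec u)); q3 (ofst (ec u)); q0 (osnd (ec u)); q1 (osnd (ec u)); q2 (osnd (ec u)); q3 (osnd (ec u))].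
Definition dec (s : seq K) : hm := HM (nth 0 s 0) (nth 0 s 1) (nth 0 s 2) (Oct (Quat (nth 0 s 3) (nth 0 s 4) (nth 0 s 5) (nth 0 s 6)) (Quat (nth 0 s 7) (nth 0 s 8) (nth 0 s 9) (nth 0 s 10))) (Oct (Quat (nth 0 s 11) (nth 0 s 12) (nth 0 s 13) (nth 0 s 14)) (Quat (nth 0 s 15) (nth 0 s 16) (nth 0 s 17) (nth 0 s 18))) (Oct (Quat (nth 0 s 19) (nth 0 s 20) (nth 0 s 21) (nth 0 s 22)) (Quat (nth 0 s 23) (nth 0 s 24) (nth 0 s 25) (nth 0 s 26))).
Lemma encK : cancel enc dec.
Proof. by case=> ? ? ? [[? ? ? ?] [? ? ? ?]] [[? ? ? ?] [? ? ? ?]] [[? ? ? ?] [? ? ? ?]]. Qed.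
HB.instance Definition _ := Equality.copy hm (can_type encK).
HB.instance Definition _ := Choice.copy hm (can_type encK).

Ltac des u := let a := fresh in let b := fresh in let c := fresh in
  case: u => a b c [[? ? ? ?] [? ? ? ?]] [[? ? ? ?] [? ? ? ?]] [[? ? ? ?] [? ? ? ?]].

Definition hadd u v := HM (d0 u + d0 v) (d1 u + d1 v) (d2 u + d2 v)
  (oadd (ea u) (ea v)) (oadd (eb u) (eb v)) (oadd (ec u) (ec v)).
Definition hopp u := HM (- d0 u) (- d1 u) (- d2 u) (oopp (ea u)) (oopp (eb u)) (oopp (ec u)).
Definition hzero := HM 0 0 0 ozero ozero ozero.
Definition hsc (k : K) u := HM (k * d0 u) (k * d1 u) (k * d2 u)
  (oscale k (ea u)) (oscale k (eb u)) (oscale k (ec u)).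

Ltac crunch := apply: hm_ext; cbv beta iota delta [hadd hopp hzero hsc ozero oadd oopp oscale
   oconj omul qmul qadd qopp qscale qconj qzero q0 q1 q2 q3 ofst osnd d0 d1 d2 ea eb ec]; ring.

Lemma haddA : associative hadd.
Proof. move=> x y z; des x; des y; des z; crunch. Qed.
Lemma haddC : commutative hadd.
Proof. move=> x y; des x; des y; crunch. Qed.
Lemma hadd0 : left_id hzero hadd.
Proof. move=> x; des x; crunch. Qed.
Lemma haddN : left_inverse hzero hopp hadd.
Proof. move=> x; des x; crunch. Qed.
HB.instance Definition _ := GRing.isZmodule.Build hm haddA haddC hadd0 haddN.
Lemma hscA a b v : hsc a (hsc b v) = hsc (a * b) v.
Proof. des v; crunch. Qed.
Lemma hsc1 : left_id 1 hsc.
Proof. move=> v; des v; crunch. Qed.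
Lemma hscDr : right_distributive hsc hadd.
Proof. move=> a u v; des u; des v; crunch. Qed.
Lemma hscDl v : {morph hsc^~ v : a b / a + b >-> hadd a b}.
Proof. move=> a b; des v; crunch. Qed.
HB.instance Definition _ := GRing.Zmodule_isLmodule.Build K hm hscA hsc1 hscDr hscDl.

Lemma haddE u v : hadd u v = u + v. Proof. by []. Qed.
Lemma hscE k u : hsc k u = k *: u. Proof. by []. Qed.
Lemma hoppE u : hopp u = - u. Proof. by []. Qed.
Lemma hzeroE : hzero = 0. Proof. by []. Qed.

Definition ip (x y : oct K) : K :=
  q0 (ofst x) * q0 (ofst y) + q1 (ofst x) * q1 (ofst y) + q2 (ofst x) * q2 (ofst y) + q3 (ofst x) * q3 (ofst y) +
  q0 (osnd x) * q0 (osnd y) + q1 (osnd x) * q1 (osnd y) + q2 (osnd x) * q2 (osnd y) + q3 (osnd x) * q3 (osnd y).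
Definition jp u v := HM
  (2^-1 * (2 * (d0 u * d0 v + ip (ea u) (ea v) + ip (eb u) (eb v))))
  (2^-1 * (2 * (d1 u * d1 v + ip (ea u) (ea v) + ip (ec u) (ec v))))
  (2^-1 * (2 * (d2 u * d2 v + ip (eb u) (eb v) + ip (ec u) (ec v))))
  (oscale 2^-1 (oadd (oadd (oscale (d0 u + d1 u) (ea v)) (oscale (d0 v + d1 v) (ea u)))
                     (oadd (omul (eb u) (oconj (ec v))) (omul (eb v) (oconj (ec u))))))
  (oscale 2^-1 (oadd (oadd (oscale (d0 u + d2 u) (eb v)) (oscale (d0 v + d2 v) (eb u)))
                     (oadd (omul (ea u) (ec v)) (omul (ea v) (ec u)))))
  (oscale 2^-1 (oadd (oadd (oscale (d1 u + d2 u) (ec v)) (oscale (d1 v + d2 v) (ec u)))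
                     (oadd (omul (oconj (ea u)) (eb v)) (omul (oconj (ea v)) (eb u))))).
Definition tr u := d0 u + d1 u + d2 u.
Definition hone := HM 1 1 1 ozero ozero ozero.

Ltac crunch2 := apply: hm_ext; cbv beta iota delta [jp ip tr hone hadd hopp hzero hsc ozero oadd oopp oscale
   oconj omul qmul qadd qopp qscale qconj qzero q0 q1 q2 q3 ofst osnd d0 d1 d2 ea eb ec]; ring.
Ltac crunchs := cbv beta iota delta [jp ip tr hone hadd hopp hzero hsc ozero oadd oopp oscale
   oconj omul qmul qadd qopp qscale qconj qzero q0 q1 q2 q3 ofst osnd d0 d1 d2 ea eb ec]; ring.

Lemma jpC u v : jp u v = jp v u.
Proof. des u; des v; crunch2. Qed.
Lemma jpDl u v w : jp (hadd u v) w = hadd (jp u w) (jp v w).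
Proof. des u; des v; des w; crunch2. Qed.
Lemma jpZl k u w : jp (hsc k u) w = hsc k (jp u w).
Proof. des u; des w; crunch2. Qed.
Lemma jp1h y : jp hone y = hsc (2 * 2^-1) y.
Proof. des y; crunch2. Qed.
Lemma trDh u v : tr (hadd u v) = tr u + tr v.
Proof. des u; des v; crunchs. Qed.
Lemma trZh k u : tr (hsc k u) = k * tr u.
Proof. des u; crunchs. Qed.
Lemma tr1 : tr hone = 3.
Proof. rewrite /tr /=. ring. Qed.
Lemma TA x y w : tr (jp (jp x y) w) = tr (jp x (jp y w)).
Proof. des x; des y; des w; crunchs. Qed.

Definition t2 : K := 2 * 2^-1.
Definition hsone (c : K) := HM c c c ozero ozero ozero.
Lemma hsoneE c : hsone c = c *: hone.
Proof. apply: hm_ext; rewrite /= ?mulr1 ?mulr0 //. Qed.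
Definition UUh x w y := hsc 2 (hadd (jp x (jp w y)) (hadd (jp w (jp x y)) (hopp (jp (jp x w) y)))).
Definition CCh x w y :=
  hadd (hsc 4 (jp (jp x w) y)) (hadd (hsc (-2 * t2 * tr x) (jp w y)) (hadd (hsc (-2 * t2 * tr w) (jp x y))
  (hadd (hsc (t2 * t2 * tr x * tr w - t2 * tr (jp x w)) y) (hadd (hsc (-2 * t2 * tr y) (jp x w)) (hadd (hsc (t2 * t2 * tr x * tr y) w)
  (hadd (hsc (t2 * t2 * tr w * tr y) x) (hsone (- tr y * (t2 * t2 * tr x * tr w - t2 * tr (jp x w)) - 2 * tr (jp (jp x w) y)
      + t2 * tr x * tr (jp w y) + t2 * tr w * tr (jp x y))))))))).
Lemma U2h x w y : UUh x w y = hadd (hsc (t2 * tr (jp x y)) w) (hadd (hsc (t2 * tr (jp w y)) x) (hopp (CCh x w y))).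
Proof.
des x; des w; des y.
apply: hm_ext.
all: cbv beta iota delta [hsone t2 UUh CCh jp ip tr hone hadd hopp hzero hsc ozero oadd oopp oscale
   oconj omul qmul qadd qopp qscale qconj qzero q0 q1 q2 q3 ofst osnd d0 d1 d2 ea eb ec].
all: ring.
Qed.
End HM.
Arguments jp : simpl never.
Arguments tr : simpl never.


Section C.
Variable K : fieldType.
Local Notation hm := (hm K).
Variable J : hm -> hm -> hm.
Variable T : hm -> K.
Variable one : hm.
Hypothesis JC : forall u v, J u v = J v u.
Hypothesis JDl : forall u v w, J (u + v) w = J u w + J v w.
Hypothesis JZl : forall k u w, J (k *: u) w = k *: J u w.
Hypothesis J1 : forall y, J one y = y.
Hypothesis TD : forall u v, T (u + v) = T u + T v.
Hypothesis TZ : forall k u, T (k *: u) = k * T u.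
Hypothesis T1 : T one = 3.
Hypothesis TA : forall x y w, T (J (J x y) w) = T (J x (J y w)).
Definition CC x w y :=
  4 *: J (J x w) y + (-2 * T x) *: J w y + (-2 * T w) *: J x y
  + (T x * T w - T (J x w)) *: y + (-2 * T y) *: J x w + (T x * T y) *: w
  + (T w * T y) *: x + (- T y * (T x * T w - T (J x w)) - 2 * T (J (J x w) y)
      + T x * T (J w y) + T w * T (J x y)) *: one.
Hypothesis U2 : forall x w y, 2 *: (J x (J w y) + J w (J x y) - J (J x w) y)
  = T (J x y) *: w + T (J w y) *: x - CC x w y.

Lemma jpDl' u v w : J (u + v) w = J u w + J v w. Proof. exact: JDl. Qed.
Lemma jpDr u v w : J u (v + w) = J u v + J u w.
Proof. by rewrite JC JDl !(JC u). Qed.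
Lemma jpZl' k u w : J (k *: u) w = k *: J u w. Proof. exact: JZl. Qed.
Lemma jpZr k u w : J u (k *: w) = k *: J u w.
Proof. by rewrite JC JZl JC. Qed.
Lemma jp0l u : J 0 u = 0.
Proof. by have := JZl 0 0 u; rewrite !scale0r. Qed.
Lemma jp0r u : J u 0 = 0.
Proof. by rewrite JC jp0l. Qed.
Lemma jpNl u w : J (- u) w = - J u w.
Proof. by rewrite -scaleN1r JZl scaleN1r. Qed.
Lemma jpNr u w : J u (- w) = - J u w.
Proof. by rewrite -scaleN1r jpZr scaleN1r. Qed.
Lemma trD u v : T (u + v) = T u + T v. Proof. exact: TD. Qed.
Lemma trZ k u : T (k *: u) = k * T u. Proof. exact: TZ. Qed.
Lemma tr0 : T 0 = 0.
Proof. by have := TZ 0 0; rewrite scale0r mul0r. Qed.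
Lemma trN u : T (- u) = - T u.
Proof. by rewrite -scaleN1r TZ mulN1r. Qed.
Definition jpE := (jpDl', jpDr, jpZl', jpZr, jp0l, jp0r, jpNl, jpNr, trD, trZ, tr0, trN).

Variable h2 : (2 : K) != 0.
Variable h3 : (3 : K) != 0.
Ltac lin := rewrite -?haddE -?hscE -?hoppE -?hzeroE; apply: hm_ext => /=; field; rewrite ?h2 ?h3 //.

Lemma lc (A B X Y : hm) (c : K) : A = B -> X - Y = c *: (A - B) -> X = Y.
Proof. by move=> ->; rewrite subrr scaler0 => /eqP; rewrite subr_eq0 => /eqP. Qed.
Lemma lcs (a b x y c : K) : a = b -> x - y = c * (a - b) -> x = y.
Proof. by move=> ->; rewrite subrr mulr0 => /eqP; rewrite subr_eq0 => /eqP. Qed.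

Section Abs.
Variables e z : hm.
Hypothesis He : J e e = e.
Hypothesis Htr : T e = 1.
Hypothesis Hz : 2 *: J e z = z.
Hypothesis Hiso : T (J z z) = 0.

Lemma Jez : J e z = 2^-1 *: z.
Proof. by rewrite -{2}Hz scalerA mulVf // scale1r. Qed.



Lemma trJez : T (J e z) = 0.
Proof.
have H := TA e e z; rewrite He [in RHS]Jez jpZr trZ in H.
by apply: (lcs (c := 2) H); field; rewrite ?h2.
Qed.
Lemma trz : T z = 0.
Proof. by rewrite -Hz trZ trJez mulr0. Qed.

Lemma U2ez y : J z (J e y) + J e (J z y)
  = 2^-1 *: J z y + (2^-1 * T (J e y)) *: z + (2^-1 * T (J z y)) *: e.
Proof.
have H := U2 e z y; rewrite /CC Jez ?jpE Htr trz in H.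
by apply: (lc (c := 2^-1) H); lin.
Qed.

Definition Th y := (-4) *: J z y + (4 *: J z (J e y) + 4 *: J e (J z y)).

Lemma ThE y : Th y = (-2) *: J z y + (2 * T (J e y)) *: z + (2 * T (J z y)) *: e.
Proof. by rewrite /Th -scalerDr U2ez; lin. Qed.

Lemma Jew : J e (J z z) = 0.
Proof.
have H := U2ez z; rewrite trJez Hiso Jez ?jpE in H.
by apply: (lc (c := 1) H); lin.
Qed.

Notation w := (J z z).

Lemma trzw : T (J z w) = 0.
Proof. by rewrite -{1}Hz jpZl' trZ (JC e z) TA Jew jp0r tr0 mulr0. Qed.

Lemma U2zz y : J z (J z y) = 2^-1 *: (T (J z y) *: z - J w y + T y *: w + T (J w y) *: one).
Proof.
have H := U2 z z y; rewrite /CC ?jpE trz Hiso in H.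
by apply: (lc (c := 2^-1 * 2^-1) H); lin.
Qed.

Lemma z3 : J z w = 0.
Proof.
have H := U2zz z; rewrite Hiso trz (JC w z) trzw ?jpE in H.
by apply: (lc (c := 2 * 3^-1) H); lin.
Qed.
Lemma Jwz : J w z = 0.
Proof. by rewrite JC z3. Qed.

Lemma Jww : J w w = 0.
Proof.
have H := U2zz w; rewrite z3 Hiso ?jpE in H.
have Ht1 := congr1 T H; rewrite ?jpE T1 in Ht1.
have Ht : T (J w w) = 0 by apply: (lcs (c := -1) Ht1); field; rewrite ?h2.
rewrite Ht ?jpE in H.
by apply: (lc (c := 2) H); lin.
Qed.

Lemma U2zw y : J z (J w y) = 2^-1 *: (T (J z y) *: w + T (J w y) *: z) - J w (J z y).
Proof.
have H := U2 z w y; rewrite /CC z3 ?jpE trz Hiso in H.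
by apply: (lc (c := 2^-1) H); lin.
Qed.

Lemma U2ww y : J w (J w y) = (2^-1 * T (J w y)) *: w.
Proof.
have H := U2 w w y; rewrite /CC Jww ?jpE Hiso in H.
by apply: (lc (c := 2^-1 * 2^-1) H); lin.
Qed.


Lemma Jze : J z e = 2^-1 *: z.
Proof. by rewrite JC Jez. Qed.

Lemma trwe : T (J w e) = 0.
Proof. by rewrite TA Jze jpZr trZ Hiso mulr0. Qed.

Ltac simpf := repeat progress rewrite -?TA ?trwe ?Jez ?Jze ?Jwz ?z3 ?Jww ?He ?Htr ?trz ?Hiso ?trJez ?jpE
   ?scale0r ?scaler0 ?mulr0 ?mul0r ?addr0 ?add0r.

Lemma L3 y : J z (J z (J z y)) = 2^-1 *: (T (J w y) *: z - J w (J z y) + T (J z y) *: w).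
Proof. by rewrite U2zz; simpf; lin. Qed.

Lemma L5 y : J z (J z (J z (J z (J z y)))) = 0.
Proof.
rewrite L3; simpf.
rewrite L3; simpf.
rewrite U2ww; simpf.
lin.
Qed.

Lemma ThZ c v : Th (c *: v) = c *: Th v.
Proof. by rewrite !ThE ?jpE; lin. Qed.

Lemma ThL3 v : Th (J z (J z (J z v))) = (-2) *: J z (J z (J z (J z v))).
Proof. by rewrite ThE; simpf; lin. Qed.

Lemma Th3 y : Th (Th (Th y)) = (-8) *: J z (J z (J z y)).
Proof. by rewrite !ThE; simpf; lin. Qed.

Lemma Th5 y : iter 5 Th y = 0.
Proof.
have -> : iter 5 Th y = Th (Th (Th (Th (Th y)))) by [].
by rewrite (Th3 y) !ThZ ThL3 !ThZ (ThL3 (J z y)) L5 !scaler0.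
Qed.

End Abs.
End C.


Section Link.
Variable K : fieldType.
Hypothesis h2 : (2 : K) != 0.
Local Notation hm := (hm K).

Definition re (x : oct K) : K := q0 (ofst x).
Definition sc (k : K) : oct K := Oct (Quat k 0 0 0) qzero.
Definition ent (u : hm) (i j : nat) : oct K :=
  match i, j with
   | 0,0 => sc (d0 u) | 1,1 => sc (d1 u) | 2,2 => sc (d2 u)
   | 0,1 => ea u | 1,0 => oconj (ea u)
   | 0,2 => eb u | 2,0 => oconj (eb u)
   | 1,2 => ec u | 2,1 => oconj (ec u)
   | _,_ => ozero end.
Definition ofh (u : hm) : omat K := \matrix_(i, j) ent u i j.
Definition toh (A : omat K) : hm :=
  HM (re (A i0 i0)) (re (A i1 i1)) (re (A i2 i2)) (A i0 i1) (A i0 i2) (A i1 i2).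

Lemma ord3 (i : 'I_3) : i = i0 \/ i = i1 \/ i = i2.
Proof.
case: i => [[|[|[|m]]] Hm] //; [left|right; left|right; right]; exact: val_inj.
Qed.

Lemma oct_ext (x y : oct K) :
  q0 (ofst x) = q0 (ofst y) -> q1 (ofst x) = q1 (ofst y) -> q2 (ofst x) = q2 (ofst y) ->
  q3 (ofst x) = q3 (ofst y) -> q0 (osnd x) = q0 (osnd y) -> q1 (osnd x) = q1 (osnd y) ->
  q2 (osnd x) = q2 (osnd y) -> q3 (osnd x) = q3 (osnd y) -> x = y.
Proof.
case: x => [[? ? ? ?] [? ? ? ?]]; case: y => [[? ? ? ?] [? ? ? ?]] /=.
by do 8 move=> ->.
Qed.

Ltac des2 u := let a := fresh in let b := fresh in let c := fresh in
  case: u => a b c [[? ? ? ?] [? ? ? ?]] [[? ? ? ?] [? ? ? ?]] [[? ? ? ?] [? ? ? ?]].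

Ltac octring := apply: oct_ext; cbv beta iota delta [sc ent re jp ip tr hadd hsc hopp hzero oadd oopp oscale
   oconj omul qmul qadd qopp qscale qconj qzero ozero q0 q1 q2 q3 ofst osnd d0 d1 d2 ea eb ec
   nat_of_ord i0 i1 i2]; ring.

Lemma toh_ofh u : toh (ofh u) = u.
Proof. by des2 u; rewrite /toh /ofh !mxE. Qed.

Lemma ofh_inj : injective ofh.
Proof. by move=> u v /(congr1 toh); rewrite !toh_ofh. Qed.

Lemma half0 (x : K) : x = - x -> x = 0.
Proof.
move=> H; have : 2 * x == 0 by rewrite mulr_natl mulr2n {2}H subrr.
by rewrite mulf_eq0 (negbTE h2) => /eqP.
Qed.

Lemma diag_real (x : oct K) : x = oconj x -> sc (re x) = x.
Proof.
case: x => [[a b c d] [f g k l]] /= [] Hb Hc Hd Hf Hg Hk Hl.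
by rewrite /sc /re /= (half0 Hb) (half0 Hc) (half0 Hd) (half0 Hf) (half0 Hg) (half0 Hk) (half0 Hl).
Qed.

Lemma ofhK A : Defs.hermitian A -> ofh (toh A) = A.
Proof.
move=> H; apply/matrixP => i j; rewrite /ofh /toh mxE.
case: (ord3 i) => [->|[->|->]]; case: (ord3 j) => [->|[->|->]] //=;
  rewrite ?diag_real -?H //.
Qed.

Lemma ofh_jp u v : jordan (ofh u) (ofh v) = ofh (jp u v).
Proof.
apply/matrixP => i j; rewrite /jordan /mscale /madd /mmul /ofh !mxE.
des2 u; des2 v.
by case: (ord3 i) => [->|[->|->]]; case: (ord3 j) => [->|[->|->]]; octring.
Qed.

Lemma ofh_add u v : madd (ofh u) (ofh v) = ofh (u + v).
Proof.
rewrite -haddE; apply/matrixP => i j; rewrite /madd /ofh !mxE.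
des2 u; des2 v.
by case: (ord3 i) => [->|[->|->]]; case: (ord3 j) => [->|[->|->]]; octring.
Qed.

Lemma ofh_scale k u : mscale k (ofh u) = ofh (k *: u).
Proof.
rewrite -hscE; apply/matrixP => i j; rewrite /mscale /ofh !mxE.
des2 u.
by case: (ord3 i) => [->|[->|->]]; case: (ord3 j) => [->|[->|->]]; octring.
Qed.

Lemma ofh0 : mzero = ofh 0.
Proof.
rewrite -hzeroE; apply/matrixP => i j; rewrite /mzero /ofh !mxE.
by case: (ord3 i) => [->|[->|->]]; case: (ord3 j) => [->|[->|->]]; octring.
Qed.

Lemma mtr_ofh u : mtr (ofh u) = sc (tr u).
Proof. rewrite /mtr /ofh !mxE; des2 u; octring. Qed.

End Link.



Section Cx.
Variable R : realType.
Local Notation f := (real_complex R).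

Lemma qmap_add p q : Defs.qmap f (qadd p q) = qadd (Defs.qmap f p) (Defs.qmap f q).
Proof. by case: p => ? ? ? ?; case: q => ? ? ? ?; rewrite /Defs.qmap /qadd /= !rmorphD. Qed.
Lemma qmap_opp p : Defs.qmap f (qopp p) = qopp (Defs.qmap f p).
Proof. by case: p => ? ? ? ?; rewrite /Defs.qmap /qopp /= !rmorphN. Qed.
Lemma qmap_conj p : Defs.qmap f (qconj p) = qconj (Defs.qmap f p).
Proof. by case: p => ? ? ? ?; rewrite /Defs.qmap /qconj /= !rmorphN. Qed.
Lemma qmap_mul p q : Defs.qmap f (qmul p q) = qmul (Defs.qmap f p) (Defs.qmap f q).
Proof. by case: p => ? ? ? ?; case: q => ? ? ? ?; rewrite /Defs.qmap /qmul /= !(rmorphD, rmorphN, rmorphM). Qed.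
Lemma qmap_scale k p : Defs.qmap f (qscale k p) = qscale (f k) (Defs.qmap f p).
Proof. by case: p => ? ? ? ?; rewrite /Defs.qmap /qscale /= !rmorphM. Qed.
Lemma omap_add x y : Defs.omap f (oadd x y) = oadd (Defs.omap f x) (Defs.omap f y).
Proof. by rewrite /Defs.omap /oadd /= !qmap_add. Qed.
Lemma omap_conj x : Defs.omap f (oconj x) = oconj (Defs.omap f x).
Proof. by rewrite /Defs.omap /oconj /= qmap_conj qmap_opp. Qed.
Lemma omap_mul x y : Defs.omap f (omul x y) = omul (Defs.omap f x) (Defs.omap f y).
Proof. by rewrite /Defs.omap /omul /= !(qmap_add, qmap_opp, qmap_mul, qmap_conj). Qed.
Lemma omap_scale k x : Defs.omap f (oscale k x) = oscale (f k) (Defs.omap f x).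
Proof. by rewrite /Defs.omap /oscale /= !qmap_scale. Qed.

Lemma RtoCE : @RtoC R = f. Proof. by []. Qed.

Lemma mmap_jordan (A B : omat R) : mmap f (jordan A B) = jordan (mmap f A) (mmap f B).
Proof.
apply/matrixP => i j; rewrite /jordan /mscale /madd /mmul /mmap !mxE.
by rewrite omap_scale !omap_add !omap_mul fmorphV rmorph_nat.
Qed.

Lemma mmap_herm (A : omat R) : Defs.hermitian A -> Defs.hermitian (mmap f A).
Proof. by move=> H i j; rewrite /mmap !mxE H omap_conj. Qed.

Lemma mtr_mmap (A : omat R) : mtr (mmap f A) = Defs.omap f (mtr A).
Proof. by rewrite /mtr /mmap !mxE !omap_add. Qed.

Lemma omap_one : Defs.omap f oone = oone.
Proof. by rewrite /Defs.omap /Defs.qmap /= rmorph1 rmorph0. Qed.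
End Cx.

Theorem proposition2p3 (R : realType) (P : omat R) (Z : omat R[i]) :
  OP2 P -> in_TC P Z -> mtr (jordan Z Z) = ozero ->
  forall X : omat R[i], in_h03C X -> iter 5 (Zhat P Z) X = mzero.
Proof.
move=> [HPh [HPP HPtr]] [HZh HZ] Hiso X [HXh _].
have h2 : (2 : R[i]) != 0 by rewrite pnatr_eq0.
have h3 : (3 : R[i]) != 0 by rewrite pnatr_eq0.
have EPc : complexify P = ofh (toh (complexify P)).
  by rewrite ofhK // /complexify RtoCE; apply: mmap_herm.
set e := toh (complexify P) in EPc.
have EZ : Z = ofh (toh Z) by rewrite ofhK.
set zz := toh Z in EZ.
have EX : X = ofh (toh X) by rewrite ofhK.
set y := toh X in EX.
have He : jp e e = e.
  apply: ofh_inj; rewrite -ofh_jp -EPc /complexify RtoCE -mmap_jordan HPP //.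
have Htr : tr e = 1.
  have := mtr_ofh e; rewrite -EPc /complexify RtoCE mtr_mmap HPtr omap_one.
  by move/(congr1 (@re _)).
have Hz : 2 *: jp e zz = zz.
  by apply: ofh_inj; rewrite -ofh_scale -ofh_jp -EPc -EZ.
have Hi : tr (jp zz zz) = 0.
  by have := mtr_ofh (jp zz zz); rewrite -ofh_jp -EZ Hiso; move/(congr1 (@re _)).
have ZE : forall u, Zhat P Z (ofh u) = ofh (Th (@jp _) e zz u).
  move=> u; rewrite /Zhat /= EPc EZ !ofh_jp !ofh_scale !ofh_add //.
have IE : forall n u, iter n (Zhat P Z) (ofh u) = ofh (iter n (Th (@jp _) e zz) u).
  by elim=> [|n IH] u //=; rewrite IH ZE.
rewrite EX IE (Th5 (T := @tr _) (one := @hone _)) ?ofh0 //.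
- exact: jpC.
- exact: jpDl.
- exact: jpZl.
- exact: trDh.
- exact: trZh.
- exact: tr1.
- exact: TA.
- move=> x w y'.
  have H := U2h x w y'.
  rewrite /UUh /CCh hsoneE /t2 divff // !mul1r !mulr1 !haddE !hscE !hoppE !addrA in H.
  by rewrite /CC ?addrA; exact H.
Qed.
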